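(* Let $S$ be a semilattice and $\omega$ a submultiplicative weight on $S$. The following are equivalent: (i) $\ell^1_\omega(S)$ is AMNM; (ii) for every $\varepsilon>0$ there exists $\delta>0$ such that whenever $\phi:S\to\{0,1\}$ satisfies $\sup_{e,f\in S}\frac{|\phi(ef)-\phi(e)\phi(f)|}{\omega(e)\omega(f)}\le\delta$, there exists a subset $F\subseteq S$ which is either empty or a filter such that $\sup_{e\in S}\frac{|\chi_F(e)-\phi(e)|}{\omega(e)}\le\varepsilon$, where $\chi_F$ is the indicator function of $F$.
   Context: A semilattice is a commutative semigroup in which every element is idempotent, ordered by $x\preceq y$ iff $xy=x$. A weight is a function $\omega:S\to(0,\infty)$, submultiplicative if $\omega(xy)\le\omega(x)\omega(y)$. $\ell^1_\omega(S)$ is the Banach space of $a:S\to\mathbb C$ with $\|a\|=\sum_s|a(s)|\omega(s)<\infty$, a Banach algebra under convolution ($\delta_x*\delta_y=\delta_{xy}$). A filter in $S$ is a non-empty subset $F$ closed under multiplication and upward closed (if $y\in F$ and $x\succeq y$ then $x\in F$). For a bounded linear map $T$ between Banach algebras, $\operatorname{def}(T)=\sup\{\|T(xy)-T(x)T(y)\|:\|x\|,\|y\|\le1\}$; $\operatorname{Mult}(A,\mathbb C)$ is the set of bounded multiplicative linear functionals on $A$ (including $0$). $A$ is AMNM if for every $\varepsilon>0$ there is $\delta>0$ such that every $\psi\in A^*$ with $\operatorname{def}(\psi)\le\delta$ satisfies $\operatorname{dist}_{A^*}(\psi,\operatorname{Mult}(A,\mathbb C))\le\varepsilon$. *)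

(* Defs.v *)
From Stdlib Require Import Reals Lra List.
Import ListNotations.
Open Scope R_scope.

Definition Cx : Type := (R * R)%type.
Definition C0 : Cx := (0, 0).
Definition Cadd (z w : Cx) : Cx := (fst z + fst w, snd z + snd w).
Definition Csub (z w : Cx) : Cx := (fst z - fst w, snd z - snd w).
Definition Cmul (z w : Cx) : Cx :=
  (fst z * fst w - snd z * snd w, fst z * snd w + snd z * fst w).
Definition Cmod (z : Cx) : R := sqrt (fst z ^ 2 + snd z ^ 2).

Definition is_semilattice {S : Type} (op : S -> S -> S) : Prop :=
  (forall x y z, op x (op y z) = op (op x y) z) /\
  (forall x y, op x y = op y x) /\
  (forall x, op x x = x).

Definition sl_le {S : Type} (op : S -> S -> S) (x y : S) : Prop := op x y = x.

Definition is_weight {S : Type} (w : S -> R) : Prop := forall s, 0 < w s.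

Definition submultiplicative {S : Type} (op : S -> S -> S) (w : S -> R) : Prop :=
  forall x y, w (op x y) <= w x * w y.

Definition is_filter {S : Type} (op : S -> S -> S) (F : S -> Prop) : Prop :=
  (exists x, F x) /\
  (forall x y, F x -> F y -> F (op x y)) /\
  (forall x y, F y -> sl_le op y x -> F x).

Definition Rsum_list {I : Type} (f : I -> R) (l : list I) : R :=
  fold_right (fun i acc => f i + acc) 0 l.
Definition Csum_list {I : Type} (f : I -> Cx) (l : list I) : Cx :=
  fold_right (fun i acc => Cadd (f i) acc) C0 l.

Definition has_sum_C {I : Type} (f : I -> Cx) (L : Cx) : Prop :=
  forall eps, 0 < eps -> exists l0 : list I,
    forall l : list I, NoDup l -> incl l0 l -> Cmod (Csub (Csum_list f l) L) < eps.

Definition l1_norm_le {S : Type} (w : S -> R) (a : S -> Cx) (r : R) : Prop :=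
  forall l : list S, NoDup l -> Rsum_list (fun s => Cmod (a s) * w s) l <= r.

Definition in_l1 {S : Type} (w : S -> R) (a : S -> Cx) : Prop :=
  exists r, l1_norm_le w a r.

Definition fadd {S : Type} (a b : S -> Cx) : S -> Cx := fun s => Cadd (a s) (b s).
Definition fscale {S : Type} (c : Cx) (a : S -> Cx) : S -> Cx := fun s => Cmul c (a s).

(** convolution: z = x * y, i.e. z(u) = sum_{st = u} x(s) y(t)
    (so that delta_s * delta_t = delta_{st}). *)
Definition conv {S : Type} (op : S -> S -> S) (x y z : S -> Cx) : Prop :=
  forall u, has_sum_C
    (fun p : { st : S * S | op (fst st) (snd st) = u } =>
       Cmul (x (fst (proj1_sig p))) (y (snd (proj1_sig p)))) (z u).

(** functionals are represented as maps (S -> Cx) -> Cx; only their values on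
    l^1_w(S) matter. *)
Definition is_linear_functional {S : Type} (w : S -> R) (psi : (S -> Cx) -> Cx) : Prop :=
  (forall a b, in_l1 w a -> in_l1 w b -> psi (fadd a b) = Cadd (psi a) (psi b)) /\
  (forall c a, in_l1 w a -> psi (fscale c a) = Cmul c (psi a)).

Definition dual_dist_le {S : Type} (w : S -> R) (psi phi : (S -> Cx) -> Cx) (r : R) : Prop :=
  forall a N, in_l1 w a -> l1_norm_le w a N -> Cmod (Csub (psi a) (phi a)) <= r * N.

Definition in_dual {S : Type} (w : S -> R) (psi : (S -> Cx) -> Cx) : Prop :=
  is_linear_functional w psi /\
  exists M, forall a N, in_l1 w a -> l1_norm_le w a N -> Cmod (psi a) <= M * N.

(** Mult(A, C), including 0 *)
Definition is_mult {S : Type} (op : S -> S -> S) (w : S -> R) (phi : (S -> Cx) -> Cx) : Prop :=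
  in_dual w phi /\
  forall x y z, in_l1 w x -> in_l1 w y -> conv op x y z ->
    phi z = Cmul (phi x) (phi y).

Definition defect_le {S : Type} (op : S -> S -> S) (w : S -> R)
  (psi : (S -> Cx) -> Cx) (delta : R) : Prop :=
  forall x y z, in_l1 w x -> in_l1 w y -> l1_norm_le w x 1 -> l1_norm_le w y 1 ->
    conv op x y z -> Cmod (Csub (psi z) (Cmul (psi x) (psi y))) <= delta.

(** dist_{A^*}(psi, Mult(A, C)) <= eps  (an infimum, hence the slack eta) *)
Definition dist_mult_le {S : Type} (op : S -> S -> S) (w : S -> R)
  (psi : (S -> Cx) -> Cx) (eps : R) : Prop :=
  forall eta, 0 < eta -> exists phi, is_mult op w phi /\ dual_dist_le w psi phi (eps + eta).

Definition AMNM_l1 {S : Type} (op : S -> S -> S) (w : S -> R) : Prop :=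
  forall eps, 0 < eps -> exists delta, 0 < delta /\
    forall psi, in_dual w psi -> defect_le op w psi delta -> dist_mult_le op w psi eps.

Definition b2R (b : bool) : R := if b then 1 else 0.

Definition cond_ii {S : Type} (op : S -> S -> S) (w : S -> R) : Prop :=
  forall eps, 0 < eps -> exists delta, 0 < delta /\
    forall phi : S -> bool,
      (forall e f, Rabs (b2R (phi (op e f)) - b2R (phi e) * b2R (phi f)) / (w e * w f) <= delta) ->
      exists F : S -> Prop,
        ((forall x, ~ F x) \/ is_filter op F) /\
        (forall e, (F e -> Rabs (1 - b2R (phi e)) / w e <= eps) /\
                   (~ F e -> Rabs (0 - b2R (phi e)) / w e <= eps)).

(* Main.v *)
Require Import Defs.
From Stdlib Require Import Reals Lra List Permutation Classical ClassicalDescription IndefiniteDescription FunctionalExtensionality ProofIrrelevance.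
From Coquelicot Require Complex.
Import ListNotations.
Open Scope R_scope.

Definition eqd {T : Type} (x y : T) : {x = y} + {x <> y} := excluded_middle_informative (x = y).

Ltac ceq := unfold Cadd, Csub, Cmul, C0; apply injective_projections; simpl; ring.

Lemma Cmod_mul z w : Cmod (Cmul z w) = Cmod z * Cmod w.
Proof. exact (Complex.Cmod_mult z w). Qed.
Lemma Cmod_add z w : Cmod (Cadd z w) <= Cmod z + Cmod w.
Proof. exact (Complex.Cmod_triangle z w). Qed.
Lemma Cmod_ge0 z : 0 <= Cmod z.
Proof. exact (Complex.Cmod_ge_0 z). Qed.
Lemma Cmod_real x : Cmod (x, 0) = Rabs x.
Proof. exact (Complex.Cmod_R x). Qed.
Lemma Cmod_eq0 z : Cmod z = 0 -> z = C0.
Proof. exact (Complex.Cmod_eq_0 z). Qed.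
Lemma Cmod_C0 : Cmod C0 = 0.
Proof. unfold C0. rewrite Cmod_real. apply Rabs_R0. Qed.
Lemma Cmod_opp z : Cmod (Csub C0 z) = Cmod z.
Proof. replace (Csub C0 z) with (Complex.Copp z) by ceq. exact (Complex.Cmod_opp z). Qed.
Lemma Cmod_sub_sym z w : Cmod (Csub z w) = Cmod (Csub w z).
Proof. replace (Csub z w) with (Csub C0 (Csub w z)) by ceq. apply Cmod_opp. Qed.
Lemma Cmod_sub z w : Cmod (Csub z w) <= Cmod z + Cmod w.
Proof. replace (Csub z w) with (Cadd z (Csub C0 w)) by ceq.
  rewrite <- (Cmod_opp w). apply Cmod_add. Qed.
Lemma Cmod_tri a b c : Cmod (Csub a c) <= Cmod (Csub a b) + Cmod (Csub b c).
Proof. replace (Csub a c) with (Cadd (Csub a b) (Csub b c)) by ceq. apply Cmod_add. Qed.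

Lemma small_le x y : (forall e, 0 < e -> x <= y + e) -> x <= y.
Proof. intros H. destruct (Rle_or_lt x y) as [h|h]; auto.
  specialize (H ((x - y)/2) ltac:(lra)). lra. Qed.

Lemma Cmod_small_eq z w : (forall e, 0 < e -> Cmod (Csub z w) <= e) -> z = w.
Proof. intros H. assert (Cmod (Csub z w) = 0).
  { apply Rle_antisym. apply small_le. intros e he. rewrite Rplus_0_l. auto. apply Cmod_ge0. }
  apply Cmod_eq0 in H0. unfold Csub, C0 in H0. injection H0; intros.
  apply injective_projections; lra. Qed.

Section Gen.
Variable I : Type.

Lemma Rsum_nil (f : I -> R) : Rsum_list f [] = 0. Proof. reflexivity. Qed.
Lemma Rsum_cons (f : I -> R) a l : Rsum_list f (a :: l) = f a + Rsum_list f l. Proof. reflexivity. Qed.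
Lemma Csum_nil (f : I -> Cx) : Csum_list f [] = C0. Proof. reflexivity. Qed.
Lemma Csum_cons (f : I -> Cx) a l : Csum_list f (a :: l) = Cadd (f a) (Csum_list f l). Proof. reflexivity. Qed.

Lemma Rsum_app (f : I -> R) l1 l2 : Rsum_list f (l1 ++ l2) = Rsum_list f l1 + Rsum_list f l2.
Proof. induction l1; cbn [app]; rewrite ?Rsum_nil, ?Rsum_cons; [ring | rewrite IHl1; ring]. Qed.
Lemma Csum_app (f : I -> Cx) l1 l2 : Csum_list f (l1 ++ l2) = Cadd (Csum_list f l1) (Csum_list f l2).
Proof. induction l1; cbn [app]; rewrite ?Csum_nil, ?Csum_cons; [ceq | rewrite IHl1; ceq]. Qed.

Lemma Rsum_le (f g : I -> R) l : (forall i, In i l -> f i <= g i) -> Rsum_list f l <= Rsum_list g l.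
Proof. induction l; intros H; rewrite ?Rsum_nil, ?Rsum_cons; [lra|].
  assert (f a <= g a) by (apply H; left; auto).
  assert (Rsum_list f l <= Rsum_list g l) by (apply IHl; intros; apply H; right; auto). lra. Qed.
Lemma Rsum_nonneg (f : I -> R) l : (forall i, 0 <= f i) -> 0 <= Rsum_list f l.
Proof. intros H. induction l; rewrite ?Rsum_nil, ?Rsum_cons; [lra|]. specialize (H a). lra. Qed.
Lemma Rsum_plus (f g : I -> R) l : Rsum_list (fun i => f i + g i) l = Rsum_list f l + Rsum_list g l.
Proof. induction l; rewrite ?Rsum_nil, ?Rsum_cons; [ring | rewrite IHl; ring]. Qed.
Lemma Rsum_scal (f : I -> R) c l : Rsum_list (fun i => c * f i) l = c * Rsum_list f l.
Proof. induction l; rewrite ?Rsum_nil, ?Rsum_cons; [ring | rewrite IHl; ring]. Qed.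
Lemma Rsum_zero l : Rsum_list (fun _ : I => 0) l = 0.
Proof. induction l; rewrite ?Rsum_nil, ?Rsum_cons; [ring | rewrite IHl; ring]. Qed.
Lemma Csum_add (f g : I -> Cx) l : Csum_list (fun i => Cadd (f i) (g i)) l = Cadd (Csum_list f l) (Csum_list g l).
Proof. induction l; rewrite ?Csum_nil, ?Csum_cons; [ceq | rewrite IHl; ceq]. Qed.
Lemma Csum_sub (f g : I -> Cx) l : Csum_list (fun i => Csub (f i) (g i)) l = Csub (Csum_list f l) (Csum_list g l).
Proof. induction l; rewrite ?Csum_nil, ?Csum_cons; [ceq | rewrite IHl; ceq]. Qed.
Lemma Csum_scale (f : I -> Cx) c l : Csum_list (fun i => Cmul c (f i)) l = Cmul c (Csum_list f l).
Proof. induction l; rewrite ?Csum_nil, ?Csum_cons; [ceq | rewrite IHl; ceq]. Qed.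
Lemma Csum_real (g : I -> R) l : Csum_list (fun i => (g i, 0)) l = (Rsum_list g l, 0).
Proof. induction l; rewrite ?Csum_nil, ?Csum_cons, ?Rsum_cons; [reflexivity | rewrite IHl; ceq]. Qed.
Lemma Cmod_Csum_le (f : I -> Cx) l : Cmod (Csum_list f l) <= Rsum_list (fun i => Cmod (f i)) l.
Proof. induction l; rewrite ?Csum_nil, ?Csum_cons, ?Rsum_nil, ?Rsum_cons.
  rewrite Cmod_C0; lra. eapply Rle_trans. apply Cmod_add. lra. Qed.

Lemma Rsum_perm (f : I -> R) l1 l2 : Permutation l1 l2 -> Rsum_list f l1 = Rsum_list f l2.
Proof. induction 1; rewrite ?Rsum_cons; try lra; congruence. Qed.
Lemma Csum_perm (f : I -> Cx) l1 l2 : Permutation l1 l2 -> Csum_list f l1 = Csum_list f l2.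
Proof. induction 1; rewrite ?Csum_cons; try reflexivity; first [congruence | ceq]. Qed.

Definition inb (P : list I) (x : I) : bool := if excluded_middle_informative (In x P) then true else false.
Lemma inb_true P x : inb P x = true <-> In x P.
Proof. unfold inb. destruct (excluded_middle_informative _); split; intros; auto; discriminate || contradiction. Qed.

Lemma Rsum_filter (f : I -> R) (p : I -> bool) l :
  Rsum_list f l = Rsum_list f (filter p l) + Rsum_list f (filter (fun x => negb (p x)) l).
Proof. induction l; cbn [filter]; rewrite ?Rsum_nil; [ring|]. destruct (p a); simpl; rewrite ?Rsum_cons; lra. Qed.
Lemma Csum_filter (f : I -> Cx) (p : I -> bool) l :
  Csum_list f l = Cadd (Csum_list f (filter p l)) (Csum_list f (filter (fun x => negb (p x)) l)).
Proof. induction l; cbn [filter]; rewrite ?Csum_nil; [ceq|]. destruct (p a); simpl; rewrite ?Csum_cons, IHl; ceq. Qed.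

Lemma Rsum_subset (g : I -> R) P Q : NoDup P -> NoDup Q -> incl P Q -> (forall i, 0 <= g i) ->
  Rsum_list g P <= Rsum_list g Q.
Proof. intros HP HQ Hi Hg. rewrite (Rsum_filter g (inb P) Q).
  rewrite (Rsum_perm g P (filter (inb P) Q)).
  - pose proof (Rsum_nonneg g (filter (fun x => negb (inb P x)) Q) Hg). lra.
  - apply NoDup_Permutation; auto. apply NoDup_filter; auto.
    intros x. rewrite filter_In, inb_true. split; intros; try tauto. split; auto. Qed.

Lemma Csum_split_incl (f : I -> Cx) P Q : NoDup P -> NoDup Q -> incl P Q ->
  Csum_list f Q = Cadd (Csum_list f P) (Csum_list f (filter (fun x => negb (inb P x)) Q)).
Proof. intros HP HQ Hi. rewrite (Csum_filter f (inb P) Q).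
  rewrite (Csum_perm f P (filter (inb P) Q)). reflexivity.
  apply NoDup_Permutation; auto. apply NoDup_filter; auto.
  intros x. rewrite filter_In, inb_true. split; intros; try tauto. split; auto. Qed.

Lemma nodup_ex (l : list I) : exists l', NoDup l' /\ forall x, In x l' <-> In x l.
Proof. exists (nodup eqd l). split. apply NoDup_nodup. intros; apply nodup_In. Qed.

Lemma has_sum_unique (f : I -> Cx) L1 L2 : has_sum_C f L1 -> has_sum_C f L2 -> L1 = L2.
Proof. intros H1 H2. apply Cmod_small_eq. intros e he.
  destruct (H1 (e/2) ltac:(lra)) as [l1 h1]. destruct (H2 (e/2) ltac:(lra)) as [l2 h2].
  destruct (nodup_ex (l1 ++ l2)) as [l [nd hl]].
  assert (i1 : incl l1 l) by (intros x hx; apply hl; apply in_or_app; auto).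
  assert (i2 : incl l2 l) by (intros x hx; apply hl; apply in_or_app; auto).
  specialize (h1 l nd i1). specialize (h2 l nd i2).
  eapply Rle_trans. apply (Cmod_tri _ (Csum_list f l)). rewrite Cmod_sub_sym. lra. Qed.

Lemma has_sum_add (f g : I -> Cx) L M : has_sum_C f L -> has_sum_C g M ->
  has_sum_C (fun i => Cadd (f i) (g i)) (Cadd L M).
Proof. intros H1 H2 e he.
  destruct (H1 (e/2) ltac:(lra)) as [l1 h1]. destruct (H2 (e/2) ltac:(lra)) as [l2 h2].
  exists (l1 ++ l2). intros l nd hi.
  assert (i1 : incl l1 l) by (intros x hx; apply hi; apply in_or_app; auto).
  assert (i2 : incl l2 l) by (intros x hx; apply hi; apply in_or_app; auto).
  specialize (h1 l nd i1). specialize (h2 l nd i2). rewrite Csum_add.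
  replace (Csub (Cadd (Csum_list f l) (Csum_list g l)) (Cadd L M)) with
    (Cadd (Csub (Csum_list f l) L) (Csub (Csum_list g l) M)) by ceq.
  eapply Rle_lt_trans. apply Cmod_add. lra. Qed.

Lemma has_sum_sub (f g : I -> Cx) L M : has_sum_C f L -> has_sum_C g M ->
  has_sum_C (fun i => Csub (f i) (g i)) (Csub L M).
Proof. intros H1 H2 e he.
  destruct (H1 (e/2) ltac:(lra)) as [l1 h1]. destruct (H2 (e/2) ltac:(lra)) as [l2 h2].
  exists (l1 ++ l2). intros l nd hi.
  assert (i1 : incl l1 l) by (intros x hx; apply hi; apply in_or_app; auto).
  assert (i2 : incl l2 l) by (intros x hx; apply hi; apply in_or_app; auto).
  specialize (h1 l nd i1). specialize (h2 l nd i2). rewrite Csum_sub.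
  replace (Csub (Csub (Csum_list f l) (Csum_list g l)) (Csub L M)) with
    (Csub (Csub (Csum_list f l) L) (Csub (Csum_list g l) M)) by ceq.
  eapply Rle_lt_trans. apply Cmod_sub. lra. Qed.

Lemma has_sum_scale (f : I -> Cx) c L : has_sum_C f L -> has_sum_C (fun i => Cmul c (f i)) (Cmul c L).
Proof. intros H e he.
  assert (hc : 0 < Cmod c + 1) by (pose proof (Cmod_ge0 c); lra).
  destruct (H (e / (Cmod c + 1)) ltac:(apply Rdiv_lt_0_compat; lra)) as [l0 h0].
  exists l0. intros l nd hi. specialize (h0 l nd hi). rewrite Csum_scale.
  replace (Csub (Cmul c (Csum_list f l)) (Cmul c L)) with (Cmul c (Csub (Csum_list f l) L)) by ceq.
  rewrite Cmod_mul.
  apply Rmult_lt_compat_l with (r := Cmod c + 1) in h0; [|lra].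
  replace ((Cmod c + 1) * (e / (Cmod c + 1))) with e in h0 by (field; lra).
  pose proof (Cmod_ge0 c). pose proof (Cmod_ge0 (Csub (Csum_list f l) L)). nra. Qed.

Lemma Csum_single (f : I -> Cx) i0 l : NoDup l -> In i0 l -> (forall i, i <> i0 -> f i = C0) ->
  Csum_list f l = f i0.
Proof. intros nd. induction nd as [|a l na nd IH]; intros hin hz. destruct hin.
  rewrite Csum_cons. destruct hin as [<-|hin].
  - assert (Csum_list f l = C0).
    { clear IH. induction l. reflexivity. rewrite Csum_cons, IHl. rewrite hz. ceq.
      intros ->. apply na; left; auto. intros h; apply na; right; auto. inversion nd; auto. }
    rewrite H; ceq.
  - rewrite IH; auto. rewrite hz. ceq. intros ->. contradiction. Qed.

Lemma has_sum_single (f : I -> Cx) i0 : (forall i, i <> i0 -> f i = C0) -> has_sum_C f (f i0).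
Proof. intros hz e he. exists [i0]. intros l nd hi. rewrite (Csum_single f i0); auto.
  replace (Csub (f i0) (f i0)) with C0 by ceq. rewrite Cmod_C0; auto. apply hi; left; auto. Qed.

Lemma has_sum_zero (f : I -> Cx) : (forall i, f i = C0) -> has_sum_C f C0.
Proof. intros hz e he. exists []. intros l nd hi.
  assert (Csum_list f l = C0). { induction l. reflexivity. rewrite Csum_cons, IHl, hz. ceq.
    inversion nd; auto. intros x []. }
  rewrite H. replace (Csub C0 C0) with C0 by ceq. rewrite Cmod_C0; auto. Qed.

Lemma lub_sums (g : I -> R) B : (forall l, NoDup l -> Rsum_list g l <= B) ->
  exists s, (forall l, NoDup l -> Rsum_list g l <= s) /\
    forall e, 0 < e -> exists l, NoDup l /\ s - e < Rsum_list g l.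
Proof. intros HB.
  set (E := fun r => exists l, NoDup l /\ r = Rsum_list g l).
  destruct (completeness E) as [m [hub hl]].
  - exists B. intros r [l [nd ->]]. auto.
  - exists 0. exists []. split. constructor. reflexivity.
  - exists m. split. intros l nd. apply hub. exists l; auto.
    intros e he. destruct (classic (exists l, NoDup l /\ m - e < Rsum_list g l)) as [h|h]; auto.
    exfalso. assert (m <= m - e). apply hl. intros r [l [nd ->]].
    destruct (Rle_or_lt (Rsum_list g l) (m - e)); auto. exfalso; apply h; exists l; auto. lra. Qed.

Lemma tail_small (g : I -> R) B : (forall i, 0 <= g i) -> (forall l, NoDup l -> Rsum_list g l <= B) ->
  forall gam, 0 < gam -> exists l0, NoDup l0 /\
    forall l, NoDup l -> (forall i, In i l -> ~ In i l0) -> Rsum_list g l <= gam.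
Proof. intros hg HB gam hgam. destruct (lub_sums g B HB) as [s [h1 h2]].
  destruct (h2 gam hgam) as [l0 [nd0 h0]]. exists l0. split; auto. intros l nd hd.
  specialize (h1 (l ++ l0) (NoDup_app nd nd0 hd)). rewrite Rsum_app in h1. lra. Qed.

Lemma has_sum_nonneg (g : I -> R) B : (forall i, 0 <= g i) -> (forall l, NoDup l -> Rsum_list g l <= B) ->
  exists s, has_sum_C (fun i => (g i, 0)) (s, 0).
Proof. intros hg HB. destruct (lub_sums g B HB) as [s [h1 h2]]. exists s. intros e he.
  destruct (h2 e he) as [l0 [nd0 h0]]. exists l0. intros l nd hi.
  rewrite Csum_real. replace (Csub (Rsum_list g l, 0) (s, 0)) with (Rsum_list g l - s, 0) by ceq.
  rewrite Cmod_real. pose proof (Rsum_subset g l0 l nd0 nd hi hg). specialize (h1 l nd).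
  apply Rabs_def1; lra. Qed.

Lemma has_sum_exists (f : I -> Cx) B : (forall l, NoDup l -> Rsum_list (fun i => Cmod (f i)) l <= B) ->
  exists L, has_sum_C f L.
Proof. intros HB.
  assert (Hp : forall (h : I -> R), (forall i, Rabs (h i) <= Cmod (f i)) -> exists s, has_sum_C (fun i => (h i, 0)) (s, 0)).
  { intros h hh.
    destruct (has_sum_nonneg (fun i => Rmax (h i) 0) B) as [s1 hs1].
    { intros; apply Rmax_r. }
    { intros l nd. eapply Rle_trans; [|apply (HB l nd)]. apply Rsum_le. intros i _.
      specialize (hh i). pose proof (Rle_abs (h i)). pose proof (Rabs_pos (h i)). apply Rmax_lub; lra. }
    destruct (has_sum_nonneg (fun i => Rmax (- h i) 0) B) as [s2 hs2].
    { intros; apply Rmax_r. }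
    { intros l nd. eapply Rle_trans; [|apply (HB l nd)]. apply Rsum_le. intros i _.
      specialize (hh i). pose proof (Rle_abs (- h i)). rewrite Rabs_Ropp in H. pose proof (Rabs_pos (h i)). apply Rmax_lub; lra. }
    exists (s1 - s2). pose proof (has_sum_sub _ _ _ _ hs1 hs2) as H.
    replace (Csub (s1, 0) (s2, 0)) with (s1 - s2, 0) in H by ceq.
    replace (fun i => (h i, 0)) with (fun i => Csub (Rmax (h i) 0, 0) (Rmax (- h i) 0, 0)); auto.
    apply functional_extensionality; intros i. unfold Csub; simpl. f_equal.
    unfold Rmax; destruct (Rle_dec _ _); destruct (Rle_dec _ _); lra. lra. }
  destruct (Hp (fun i => fst (f i))) as [a ha].
  { intros i. unfold Cmod. rewrite <- sqrt_Rsqr_abs. apply sqrt_le_1_alt. unfold Rsqr; simpl. nra. }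
  destruct (Hp (fun i => snd (f i))) as [b hb].
  { intros i. unfold Cmod. rewrite <- sqrt_Rsqr_abs. apply sqrt_le_1_alt. unfold Rsqr; simpl. nra. }
  exists (Cadd (a, 0) (Cmul (0, 1) (b, 0))).
  pose proof (has_sum_add _ _ _ _ ha (has_sum_scale _ (0,1) _ hb)) as H.
  replace f with (fun i => Cadd (fst (f i), 0) (Cmul (0, 1) (snd (f i), 0))); auto.
  apply functional_extensionality; intros i. destruct (f i) as [x y]. ceq. Qed.

End Gen.
Section W.
Variable S : Type.
Variable op : S -> S -> S.
Variable w : S -> R.
Hypothesis HS : is_semilattice op.
Hypothesis Hw : is_weight w.
Hypothesis Hsub : submultiplicative op w.

Definition C1 : Cx := (1, 0).
Definition delta (s : S) : S -> Cx := fun u => if eqd u s then C1 else C0.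
Definition bC (b : bool) : Cx := (b2R b, 0).

Lemma w_pos s : 0 < w s. Proof. apply Hw. Qed.
Lemma w_ge1 s : 1 <= w s.
Proof. pose proof (Hsub s s). destruct HS as [_ [_ hid]]. rewrite hid in H. pose proof (w_pos s). nra. Qed.

Lemma Cmod_C1 : Cmod C1 = 1. Proof. unfold C1. rewrite Cmod_real. apply Rabs_R1. Qed.

Lemma Rsum_single_le (g : S -> R) s l : NoDup l -> (forall u, 0 <= g u) -> (forall u, u <> s -> g u = 0) ->
  Rsum_list g l <= g s.
Proof. intros nd hg hz. induction nd as [|a l na nd IH]. rewrite Rsum_nil; auto.
  rewrite Rsum_cons. destruct (eqd a s) as [->|ne].
  - assert (Rsum_list g l <= Rsum_list (fun _ => 0) l).
    { apply Rsum_le. intros i hi. rewrite hz. lra. intros ->. contradiction. }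
    rewrite Rsum_zero in H. lra.
  - rewrite hz; auto. lra. Qed.

Lemma l1_single (a : S -> Cx) s : (forall u, u <> s -> a u = C0) -> l1_norm_le w a (Cmod (a s) * w s).
Proof. intros hz l nd. apply (Rsum_single_le (fun u => Cmod (a u) * w u) s l nd).
  intros u. pose proof (Cmod_ge0 (a u)). pose proof (w_pos u). nra.
  intros u hu. rewrite hz; auto. rewrite Cmod_C0. ring. Qed.

Lemma delta_zero s u : u <> s -> delta s u = C0.
Proof. intros h. unfold delta. destruct (eqd u s); auto; contradiction. Qed.
Lemma delta_same s : delta s s = C1.
Proof. unfold delta. destruct (eqd s s); auto; contradiction. Qed.

Lemma l1_delta s : l1_norm_le w (delta s) (w s).
Proof. pose proof (l1_single (delta s) s (delta_zero s)). rewrite delta_same, Cmod_C1, Rmult_1_l in H. auto. Qed.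
Lemma l1_sdelta c s : l1_norm_le w (fscale c (delta s)) (Cmod c * w s).
Proof. assert (forall u, u <> s -> fscale c (delta s) u = C0).
  { intros u h. unfold fscale. rewrite delta_zero; auto. ceq. }
  pose proof (l1_single _ s H). unfold fscale at 2 in H0. rewrite delta_same in H0.
  rewrite Cmod_mul, Cmod_C1, Rmult_1_r in H0. auto. Qed.

Lemma l1_mono a N1 N2 : l1_norm_le w a N1 -> N1 <= N2 -> l1_norm_le w a N2.
Proof. intros h hN l nd. specialize (h l nd). lra. Qed.
Lemma l1_N_nonneg a N : l1_norm_le w a N -> 0 <= N.
Proof. intros h. specialize (h [] (NoDup_nil _)). rewrite Rsum_nil in h. auto. Qed.
Lemma l1_add a b Na Nb : l1_norm_le w a Na -> l1_norm_le w b Nb -> l1_norm_le w (fadd a b) (Na + Nb).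
Proof. intros ha hb l nd. specialize (ha l nd). specialize (hb l nd).
  eapply Rle_trans; [|apply Rplus_le_compat; eauto]. rewrite <- Rsum_plus. apply Rsum_le.
  intros i _. unfold fadd. pose proof (Cmod_add (a i) (b i)). pose proof (w_pos i). nra. Qed.
Lemma l1_scale c a N : l1_norm_le w a N -> l1_norm_le w (fscale c a) (Cmod c * N).
Proof. intros ha l nd. specialize (ha l nd).
  replace (Rsum_list (fun s => Cmod (fscale c a s) * w s) l) with (Cmod c * Rsum_list (fun s => Cmod (a s) * w s) l).
  pose proof (Cmod_ge0 c). nra.
  rewrite <- Rsum_scal. f_equal. apply functional_extensionality. intros s. unfold fscale. rewrite Cmod_mul. ring. Qed.
Lemma in_l1_add a b : in_l1 w a -> in_l1 w b -> in_l1 w (fadd a b).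
Proof. intros [r1 h1] [r2 h2]. exists (r1 + r2). apply l1_add; auto. Qed.
Lemma in_l1_scale c a : in_l1 w a -> in_l1 w (fscale c a).
Proof. intros [r1 h1]. exists (Cmod c * r1). apply l1_scale; auto. Qed.
Lemma in_l1_delta s : in_l1 w (delta s).
Proof. exists (w s). apply l1_delta. Qed.
Lemma in_l1_sdelta c s : in_l1 w (fscale c (delta s)).
Proof. exists (Cmod c * w s). apply l1_sdelta. Qed.
Lemma l1_zero : l1_norm_le w (fun _ => C0) 0.
Proof. intros l nd. rewrite Cmod_C0. replace (fun _ : S => 0 * w _) with (fun _ : S => 0).
  rewrite Rsum_zero; lra. apply functional_extensionality; intros; ring. Qed.
Lemma in_l1_zero : in_l1 w (fun _ => C0).
Proof. exists 0. apply l1_zero. Qed.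

Definition restr (a : S -> Cx) (l : list S) : S -> Cx := fun s => if inb S l s then a s else C0.
Definition restrc (a : S -> Cx) (l : list S) : S -> Cx := fun s => if inb S l s then C0 else a s.

Lemma restr_cons a x l : ~ In x l ->
  restr a (x :: l) = fadd (fscale (a x) (delta x)) (restr a l).
Proof. intros hx. apply functional_extensionality; intros u. unfold restr, fadd, fscale.
  destruct (eqd u x) as [->|ne].
  - rewrite delta_same. destruct (inb S (x :: l) x) eqn:E1; destruct (inb S l x) eqn:E2.
    + apply inb_true in E2; contradiction.
    + unfold C1; ceq.
    + exfalso. assert (In x (x :: l)) by (left; auto). apply inb_true in H. congruence.
    + exfalso. assert (In x (x :: l)) by (left; auto). apply inb_true in H. congruence.
  - rewrite delta_zero; auto. destruct (inb S (x :: l) u) eqn:E1; destruct (inb S l u) eqn:E2.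
    + ceq.
    + exfalso. apply inb_true in E1. destruct E1 as [->|h]. contradiction. apply inb_true in h. congruence.
    + exfalso. apply inb_true in E2. assert (In u (x :: l)) by (right; auto). apply inb_true in H. congruence.
    + ceq. Qed.

Lemma restr_nil a : restr a [] = fun _ => C0.
Proof. apply functional_extensionality; intros u. unfold restr.
  destruct (inb S [] u) eqn:E; auto. apply inb_true in E. destruct E. Qed.

Lemma in_l1_restr a l : in_l1 w (restr a l).
Proof. induction l. rewrite restr_nil. apply in_l1_zero.
  destruct (classic (In a0 l)).
  - replace (restr a (a0 :: l)) with (restr a l); auto. apply functional_extensionality; intros u.
    unfold restr. f_equal. destruct (inb S l u) eqn:E1; destruct (inb S (a0::l) u) eqn:E2; auto.
    apply inb_true in E1. assert (In u (a0 :: l)) by (right; auto). apply inb_true in H0. congruence.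
    apply inb_true in E2. destruct E2 as [->|h]. apply inb_true in H. congruence. apply inb_true in h. congruence.
  - rewrite restr_cons; auto. apply in_l1_add; auto. apply in_l1_sdelta. Qed.

Section Lin.
Variable Psi : (S -> Cx) -> Cx.
Hypothesis Hadd : forall a b, in_l1 w a -> in_l1 w b -> Psi (fadd a b) = Cadd (Psi a) (Psi b).
Hypothesis Hscale : forall k a, in_l1 w a -> Psi (fscale k a) = Cmul k (Psi a).

Lemma Psi_zero : Psi (fun _ => C0) = C0.
Proof. replace (fun _ : S => C0) with (fscale C0 (fun _ : S => C0)).
  rewrite Hscale. ceq. apply in_l1_zero. apply functional_extensionality; intros; unfold fscale; ceq. Qed.

Lemma Psi_restr a l : NoDup l -> Psi (restr a l) = Csum_list (fun s => Cmul (a s) (Psi (delta s))) l.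
Proof. induction 1. rewrite restr_nil, Psi_zero. reflexivity.
  rewrite restr_cons; auto. rewrite Hadd, Hscale, IHNoDup, Csum_cons; auto.
  apply in_l1_delta. apply in_l1_sdelta. apply in_l1_restr. Qed.

Lemma approx M c :
  (forall a N, in_l1 w a -> l1_norm_le w a N -> Cmod (Psi a) <= M * N) ->
  0 <= c -> (forall s, Cmod (Psi (delta s)) <= c * w s) ->
  forall a N, in_l1 w a -> l1_norm_le w a N -> Cmod (Psi a) <= c * N.
Proof. intros HM hc Hd a N ha hN. apply small_le. intros e he.
  destruct ha as [r hr].
  set (g := fun s => Cmod (a s) * w s).
  assert (hg : forall s, 0 <= g s). { intros s. unfold g. pose proof (Cmod_ge0 (a s)); pose proof (w_pos s); nra. }
  set (gam := e / (Rabs M + 1)).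
  assert (hgam : 0 < gam). { unfold gam. apply Rdiv_lt_0_compat; auto. pose proof (Rabs_pos M); lra. }
  destruct (tail_small S g r hg hr gam hgam) as [l0 [nd0 ht]].
  assert (Ea : a = fadd (restr a l0) (restrc a l0)).
  { apply functional_extensionality; intros u. unfold fadd, restr, restrc. destruct (inb S l0 u); ceq. }
  assert (h2 : l1_norm_le w (restrc a l0) gam).
  { intros l nd. rewrite (Rsum_filter _ _ (inb S l0) l).
    assert (Rsum_list (fun s => Cmod (restrc a l0 s) * w s) (filter (inb S l0) l) <= 0).
    { rewrite <- (Rsum_zero S (filter (inb S l0) l)). apply Rsum_le. intros i hi.
      apply filter_In in hi. destruct hi as [_ hi]. unfold restrc. rewrite hi, Cmod_C0. lra. }
    assert (Rsum_list (fun s => Cmod (restrc a l0 s) * w s) (filter (fun x => negb (inb S l0 x)) l) <= gam).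
    { eapply Rle_trans; [|apply (ht (filter (fun x => negb (inb S l0 x)) l))].
      apply Rsum_le. intros i hi. apply filter_In in hi. destruct hi as [_ hi]. unfold restrc, g.
      destruct (inb S l0 i); simpl in hi; try discriminate. lra.
      apply NoDup_filter; auto.
      intros i hi hin. apply filter_In in hi. destruct hi as [_ hi]. apply inb_true in hin. rewrite hin in hi. discriminate. }
    lra. }
  assert (h1 : Cmod (Psi (restr a l0)) <= c * N).
  { rewrite Psi_restr; auto. eapply Rle_trans. apply Cmod_Csum_le.
    eapply Rle_trans with (Rsum_list (fun s => c * g s) l0).
    apply Rsum_le. intros i _. rewrite Cmod_mul. unfold g. specialize (Hd i). pose proof (Cmod_ge0 (a i)). nra.
    rewrite Rsum_scal. specialize (hN l0 nd0). fold g in hN. nra. }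
  assert (h3 : Cmod (Psi (restrc a l0)) <= Rabs M * gam).
  { eapply Rle_trans. apply (HM _ gam). exists gam; auto. auto. pose proof (Rle_abs M). nra. }
  assert (Rabs M * gam <= e). { pose proof (Rabs_pos M).
    assert (gam * (Rabs M + 1) = e) by (unfold gam; field; lra). nra. }
  rewrite Ea, Hadd. eapply Rle_trans. apply Cmod_add. lra. apply in_l1_restr.
  exists gam; auto. Qed.
End Lin.

Definition gth (th : S -> bool) (a : S -> Cx) : S -> Cx := fun s => if th s then a s else C0.
Definition Theta (th : S -> bool) (a : S -> Cx) : Cx :=
  match excluded_middle_informative (exists L, has_sum_C (gth th a) L) with
  | left H => proj1_sig (constructive_indefinite_description _ H)
  | right _ => C0 end.

Lemma Theta_spec th a : in_l1 w a -> has_sum_C (gth th a) (Theta th a).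
Proof. intros [r hr]. unfold Theta. destruct (excluded_middle_informative _) as [H|H].
  - apply (proj2_sig (constructive_indefinite_description _ H)).
  - exfalso. apply H. apply (has_sum_exists S _ r). intros l nd. eapply Rle_trans; [|apply (hr l nd)].
    apply Rsum_le. intros i _. unfold gth. pose proof (w_ge1 i). pose proof (Cmod_ge0 (a i)).
    destruct (th i). nra. rewrite Cmod_C0. nra. Qed.

Lemma Theta_add th a b : in_l1 w a -> in_l1 w b -> Theta th (fadd a b) = Cadd (Theta th a) (Theta th b).
Proof. intros ha hb. apply (has_sum_unique S (gth th (fadd a b))). apply Theta_spec, in_l1_add; auto.
  replace (gth th (fadd a b)) with (fun s => Cadd (gth th a s) (gth th b s)).
  apply has_sum_add; apply Theta_spec; auto.
  apply functional_extensionality; intros s. unfold gth, fadd. destruct (th s); auto. ceq. Qed.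

Lemma Theta_scale th c a : in_l1 w a -> Theta th (fscale c a) = Cmul c (Theta th a).
Proof. intros ha. apply (has_sum_unique S (gth th (fscale c a))). apply Theta_spec, in_l1_scale; auto.
  replace (gth th (fscale c a)) with (fun s => Cmul c (gth th a s)).
  apply has_sum_scale; apply Theta_spec; auto.
  apply functional_extensionality; intros s. unfold gth, fscale. destruct (th s); auto. ceq. Qed.

Lemma Theta_bound th a N : in_l1 w a -> l1_norm_le w a N -> Cmod (Theta th a) <= N.
Proof. intros ha hN. apply small_le. intros e he. destruct (Theta_spec th a ha e he) as [l0 h0].
  destruct (nodup_ex S l0) as [l [nd hl]]. specialize (h0 l nd ltac:(intros x hx; apply hl; auto)).
  replace (Theta th a) with (Cadd (Csub (Theta th a) (Csum_list (gth th a) l)) (Csum_list (gth th a) l)) by ceq.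
  eapply Rle_trans. apply Cmod_add. rewrite Cmod_sub_sym.
  assert (Cmod (Csum_list (gth th a) l) <= N).
  { eapply Rle_trans. apply Cmod_Csum_le. eapply Rle_trans; [|apply (hN l nd)]. apply Rsum_le.
    intros i _. unfold gth. pose proof (w_ge1 i). pose proof (Cmod_ge0 (a i)).
    destruct (th i). nra. rewrite Cmod_C0. nra. }
  lra. Qed.

Lemma Theta_delta th s : Theta th (delta s) = bC (th s).
Proof. apply (has_sum_unique S (gth th (delta s))). apply Theta_spec, in_l1_delta.
  replace (bC (th s)) with (gth th (delta s) s). apply has_sum_single.
  intros u hu. unfold gth. rewrite delta_zero; auto. destruct (th u); auto.
  unfold gth, bC, b2R. rewrite delta_same. destruct (th s); reflexivity. Qed.

Lemma Theta_dual th : in_dual w (Theta th).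
Proof. split. split. apply Theta_add. apply Theta_scale.
  exists 1. intros a N ha hN. rewrite Rmult_1_l. apply Theta_bound; auto. Qed.

Lemma Rsum_map {A B : Type} (f : B -> R) (g : A -> B) l : Rsum_list f (map g l) = Rsum_list (fun x => f (g x)) l.
Proof. induction l; [reflexivity|]. cbn [map]. rewrite !Rsum_cons, IHl. reflexivity. Qed.

Lemma NoDup_prod {A B : Type} (l1 : list A) (l2 : list B) : NoDup l1 -> NoDup l2 -> NoDup (list_prod l1 l2).
Proof. intros n1 n2. induction n1 as [|a l1 na n1 IH]. constructor. simpl. apply NoDup_app; auto.
  apply FinFun.Injective_map_NoDup; auto. intros y1 y2 h. injection h; auto.
  intros p hp hq. apply in_map_iff in hp. destruct hp as [y [<- _]]. apply in_prod_iff in hq. tauto. Qed.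

Lemma Rsum_prod {A B : Type} (X : A -> R) (Y : B -> R) l1 l2 :
  Rsum_list (fun p => X (fst p) * Y (snd p)) (list_prod l1 l2) = Rsum_list X l1 * Rsum_list Y l2.
Proof. induction l1. simpl. unfold Rsum_list; simpl; ring. cbn [list_prod flat_map]. rewrite Rsum_app.
  change (flat_map (fun x : A => map (fun y : B => (x, y)) l2) l1) with (list_prod l1 l2).
  rewrite IHl1, Rsum_map. rewrite Rsum_cons. cbn [fst snd]. rewrite (Rsum_scal B Y (X a)). ring. Qed.

Lemma pair_bound (X Y : S -> R) Nx Ny (P : list (S * S)) :
  (forall s, 0 <= X s) -> (forall s, 0 <= Y s) ->
  (forall l, NoDup l -> Rsum_list X l <= Nx) -> (forall l, NoDup l -> Rsum_list Y l <= Ny) ->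
  NoDup P -> Rsum_list (fun p => X (fst p) * Y (snd p)) P <= Nx * Ny.
Proof. intros hX hY bX bY nP.
  set (L1 := nodup eqd (map fst P)). set (L2 := nodup eqd (map snd P)).
  eapply Rle_trans. apply (Rsum_subset (S * S) _ P (list_prod L1 L2)); auto.
  apply NoDup_prod; apply NoDup_nodup.
  intros [s t] hp. apply in_prod_iff. unfold L1, L2. rewrite !nodup_In. split.
  apply in_map_iff. exists (s, t); auto. apply in_map_iff. exists (s, t); auto.
  intros [s t]. simpl. specialize (hX s); specialize (hY t). nra.
  rewrite Rsum_prod. pose proof (bX L1 (NoDup_nodup _ _)). pose proof (bY L2 (NoDup_nodup _ _)).
  pose proof (Rsum_nonneg S X L1 hX). pose proof (Rsum_nonneg S Y L2 hY). nra. Qed.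

Lemma has_sum_ext {I : Type} (f g : I -> Cx) L : (forall i, f i = g i) -> has_sum_C f L -> has_sum_C g L.
Proof. intros h. replace g with f; auto. apply functional_extensionality; auto. Qed.

Definition fib (u : S) := { st : S * S | op (fst st) (snd st) = u }.
Definition ff (x y : S -> Cx) (u : S) : fib u -> Cx :=
  fun p => Cmul (x (fst (proj1_sig p))) (y (snd (proj1_sig p))).

Lemma proj_inj u : FinFun.Injective (fun p : fib u => proj1_sig p).
Proof. intros [a ha] [b hb] h. simpl in h. subst. f_equal. apply proof_irrelevance. Qed.

Lemma ff_bound x y Nx Ny u : l1_norm_le w x Nx -> l1_norm_le w y Ny ->
  forall l, NoDup l -> Rsum_list (fun p => Cmod (ff x y u p)) l <= Nx * Ny.
Proof. intros hx hy l nd.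
  eapply Rle_trans; [|apply (pair_bound (fun s => Cmod (x s) * w s) (fun s => Cmod (y s) * w s) Nx Ny
     (map (fun p : fib u => proj1_sig p) l))]; auto.
  - rewrite Rsum_map. apply Rsum_le. intros p _. unfold ff. rewrite Cmod_mul.
    pose proof (w_ge1 (fst (proj1_sig p))). pose proof (w_ge1 (snd (proj1_sig p))).
    pose proof (Cmod_ge0 (x (fst (proj1_sig p)))). pose proof (Cmod_ge0 (y (snd (proj1_sig p)))).
    assert (Cmod (x (fst (proj1_sig p))) <= Cmod (x (fst (proj1_sig p))) * w (fst (proj1_sig p))) by nra.
    assert (Cmod (y (snd (proj1_sig p))) <= Cmod (y (snd (proj1_sig p))) * w (snd (proj1_sig p))) by nra.
    apply Rmult_le_compat; auto.
  - intros s. pose proof (Cmod_ge0 (x s)); pose proof (w_pos s); nra.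
  - intros s. pose proof (Cmod_ge0 (y s)); pose proof (w_pos s); nra.
  - apply FinFun.Injective_map_NoDup; auto. apply proj_inj. Qed.

Definition cv (x y : S -> Cx) : S -> Cx := fun u =>
  match excluded_middle_informative (exists L, has_sum_C (ff x y u) L) with
  | left H => proj1_sig (constructive_indefinite_description _ H)
  | right _ => C0 end.

Lemma cv_spec x y u : in_l1 w x -> in_l1 w y -> has_sum_C (ff x y u) (cv x y u).
Proof. intros [r1 h1] [r2 h2]. unfold cv. destruct (excluded_middle_informative _) as [H|H].
  - apply (proj2_sig (constructive_indefinite_description _ H)).
  - exfalso. apply H. apply (has_sum_exists _ _ (r1 * r2)). apply ff_bound; auto. Qed.

Lemma cv_conv x y : in_l1 w x -> in_l1 w y -> conv op x y (cv x y).
Proof. intros hx hy u. apply (cv_spec x y u hx hy). Qed.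

Lemma conv_cv x y z : in_l1 w x -> in_l1 w y -> conv op x y z -> z = cv x y.
Proof. intros hx hy hz. apply functional_extensionality; intros u.
  apply (has_sum_unique _ (ff x y u)). apply (hz u). apply cv_spec; auto. Qed.

Lemma cv_add_l x x' y : in_l1 w x -> in_l1 w x' -> in_l1 w y ->
  cv (fadd x x') y = fadd (cv x y) (cv x' y).
Proof. intros h1 h2 h3. symmetry. apply conv_cv; auto. apply in_l1_add; auto. intros u.
  apply (has_sum_ext (fun p => Cadd (ff x y u p) (ff x' y u p))).
  intros p. unfold ff, fadd. ceq.
  apply (has_sum_add _ _ _ (cv x y u) (cv x' y u)); apply cv_spec; auto. Qed.
Lemma cv_add_r x y y' : in_l1 w x -> in_l1 w y -> in_l1 w y' ->
  cv x (fadd y y') = fadd (cv x y) (cv x y').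
Proof. intros h1 h2 h3. symmetry. apply conv_cv; auto. apply in_l1_add; auto. intros u.
  apply (has_sum_ext (fun p => Cadd (ff x y u p) (ff x y' u p))).
  intros p. unfold ff, fadd. ceq.
  apply (has_sum_add _ _ _ (cv x y u) (cv x y' u)); apply cv_spec; auto. Qed.
Lemma cv_scale_l c x y : in_l1 w x -> in_l1 w y -> cv (fscale c x) y = fscale c (cv x y).
Proof. intros h1 h2. symmetry. apply conv_cv; auto. apply in_l1_scale; auto. intros u.
  apply (has_sum_ext (fun p => Cmul c (ff x y u p))).
  intros p. unfold ff, fscale. ceq.
  apply (has_sum_scale _ _ c (cv x y u)); apply cv_spec; auto. Qed.
Lemma cv_scale_r c x y : in_l1 w x -> in_l1 w y -> cv x (fscale c y) = fscale c (cv x y).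
Proof. intros h1 h2. symmetry. apply conv_cv; auto. apply in_l1_scale; auto. intros u.
  apply (has_sum_ext (fun p => Cmul c (ff x y u p))).
  intros p. unfold ff, fscale. ceq.
  apply (has_sum_scale _ _ c (cv x y u)); apply cv_spec; auto. Qed.

Lemma cv_delta s t : cv (delta s) (delta t) = delta (op s t).
Proof. symmetry. apply conv_cv; try apply in_l1_delta. intros u.
  destruct (eqd (op s t) u) as [e|ne].
  - set (i0 := exist (fun st : S * S => op (fst st) (snd st) = u) (s, t) e).
    replace (delta (op s t) u) with (ff (delta s) (delta t) u i0).
    apply has_sum_single. intros [[a b] hab] hne. unfold ff; simpl.
    destruct (eqd a s) as [->|na]. destruct (eqd b t) as [->|nb].
    exfalso. apply hne. unfold i0. f_equal. apply proof_irrelevance.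
    rewrite (delta_zero t b nb). ceq. rewrite (delta_zero s a na). ceq.
    unfold ff, i0; simpl. rewrite !delta_same. subst u. rewrite delta_same. unfold C1; ceq.
  - rewrite delta_zero; auto. apply has_sum_zero. intros [[a b] hab]. simpl.
    destruct (eqd a s) as [->|na]. destruct (eqd b t) as [->|nb].
    simpl in hab. contradiction.
    rewrite (delta_zero t b nb). ceq. rewrite (delta_zero s a na). ceq. Qed.

Definition hprod (x y : S -> Cx) (p : S * S) : R :=
  (Cmod (x (fst p)) * w (fst p)) * (Cmod (y (snd p)) * w (snd p)).

Lemma cv_cover x y : in_l1 w x -> in_l1 w y -> forall U, NoDup U -> forall gam, 0 < gam ->
  exists P, NoDup P /\ (forall p, In p P -> In (op (fst p) (snd p)) U) /\
    Rsum_list (fun u => Cmod (cv x y u) * w u) U <= Rsum_list (hprod x y) P + gam.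
Proof. intros hx hy U nd. induction nd as [|u U nu nd IH]; intros gam hg.
  - exists []. split. constructor. split. intros p []. rewrite !Rsum_nil. lra.
  - destruct (IH (gam / 2) ltac:(lra)) as [P [nP [hP sP]]].
    pose proof (w_pos u) as wu.
    assert (he : 0 < gam / (2 * w u)) by (apply Rdiv_lt_0_compat; lra).
    destruct (cv_spec x y u hx hy _ he) as [l0 h0].
    destruct (nodup_ex _ l0) as [lu [ndu hlu]].
    specialize (h0 lu ndu ltac:(intros z hz; apply hlu; auto)).
    exists (map (fun p : fib u => proj1_sig p) lu ++ P). split; [|split].
    + apply NoDup_app; auto. apply FinFun.Injective_map_NoDup; auto. apply proj_inj.
      intros p hp hq. apply in_map_iff in hp. destruct hp as [[q e] [<- _]]. simpl in hq.
      apply hP in hq. simpl in e. rewrite e in hq. contradiction.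
    + intros p hp. apply in_app_or in hp. destruct hp as [hp|hp].
      apply in_map_iff in hp. destruct hp as [[q e] [<- _]]. simpl. left. auto.
      right. auto.
    + rewrite Rsum_cons, Rsum_app, Rsum_map.
      assert (Cmod (cv x y u) <= Rsum_list (fun p => Cmod (ff x y u p)) lu + gam / (2 * w u)).
      { replace (cv x y u) with (Cadd (Csub (cv x y u) (Csum_list (ff x y u) lu)) (Csum_list (ff x y u) lu)) by ceq.
        eapply Rle_trans. apply Cmod_add. rewrite Cmod_sub_sym. pose proof (Cmod_Csum_le _ (ff x y u) lu). lra. }
      assert (Rsum_list (fun p => Cmod (ff x y u p)) lu * w u <= Rsum_list (fun p : fib u => hprod x y (proj1_sig p)) lu).
      { rewrite Rmult_comm, <- Rsum_scal. apply Rsum_le. intros [[s t] e] _. unfold ff, hprod; simpl.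
        simpl in e. rewrite Cmod_mul. pose proof (Hsub s t). rewrite e in H0.
        pose proof (Cmod_ge0 (x s)). pose proof (Cmod_ge0 (y t)). pose proof (w_pos s). pose proof (w_pos t).
        assert (0 <= Cmod (x s) * Cmod (y t)) by nra. nra. }
      assert (Cmod (cv x y u) * w u <= Rsum_list (fun p : fib u => hprod x y (proj1_sig p)) lu + gam / 2).
      { assert (gam / (2 * w u) * w u = gam / 2) by (field; lra). nra. }
      lra. Qed.

Lemma cv_norm x y Nx Ny : in_l1 w x -> in_l1 w y -> l1_norm_le w x Nx -> l1_norm_le w y Ny ->
  l1_norm_le w (cv x y) (Nx * Ny).
Proof. intros hx hy bx bY U nd. apply small_le. intros e he.
  destruct (cv_cover x y hx hy U nd e he) as [P [nP [_ sP]]].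
  assert (Rsum_list (hprod x y) P <= Nx * Ny).
  { apply (pair_bound (fun s => Cmod (x s) * w s) (fun s => Cmod (y s) * w s)); auto.
    intros s. pose proof (Cmod_ge0 (x s)); pose proof (w_pos s); nra.
    intros s. pose proof (Cmod_ge0 (y s)); pose proof (w_pos s); nra. }
  lra. Qed.

Lemma in_l1_cv x y : in_l1 w x -> in_l1 w y -> in_l1 w (cv x y).
Proof. intros hx hy. pose proof hx as [r1 h1]. pose proof hy as [r2 h2]. exists (r1 * r2). apply cv_norm; auto. Qed.

Lemma Cmod_bC b : Cmod (bC b) <= 1.
Proof. unfold bC, b2R. rewrite Cmod_real. destruct b; rewrite ?Rabs_R1, ?Rabs_R0; lra. Qed.

Ltac l1auto := repeat (first [assumption | apply in_l1_cv | apply in_l1_delta | apply in_l1_add | apply in_l1_scale]).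

Lemma Theta_prod th D : 0 <= D ->
  (forall s t, Cmod (Csub (bC (th (op s t))) (Cmul (bC (th s)) (bC (th t)))) <= D * w s * w t) ->
  forall x y Nx Ny, in_l1 w x -> in_l1 w y -> l1_norm_le w x Nx -> l1_norm_le w y Ny ->
  Cmod (Csub (Theta th (cv x y)) (Cmul (Theta th x) (Theta th y))) <= D * Nx * Ny.
Proof. intros hD hth.
  assert (Step1 : forall t x Nx, in_l1 w x -> l1_norm_le w x Nx ->
     Cmod (Csub (Theta th (cv x (delta t))) (Cmul (Theta th x) (Theta th (delta t)))) <= (D * w t) * Nx).
  { intros t.
    apply (approx (fun x => Csub (Theta th (cv x (delta t))) (Cmul (Theta th x) (Theta th (delta t))))) with (M := w t + 1).
    - intros a b ha hb. rewrite cv_add_l; try solve [l1auto]. rewrite !Theta_add; try solve [l1auto]. ceq.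
    - intros k a ha. rewrite cv_scale_l; try solve [l1auto]. rewrite !Theta_scale; try solve [l1auto]. ceq.
    - intros a N ha hN. eapply Rle_trans. apply Cmod_sub. rewrite Cmod_mul.
      pose proof (Theta_bound th (cv a (delta t)) (N * w t) (in_l1_cv _ _ ha (in_l1_delta t)) (cv_norm _ _ _ _ ha (in_l1_delta t) hN (l1_delta t))).
      pose proof (Theta_bound th a N ha hN). rewrite Theta_delta. pose proof (Cmod_bC (th t)).
      pose proof (Cmod_ge0 (Theta th a)). pose proof (l1_N_nonneg _ _ hN). nra.
    - pose proof (w_pos t). nra.
    - intros s. rewrite cv_delta, !Theta_delta. specialize (hth s t). lra. }
  intros x y Nx Ny hx hy bx bY.
  apply (approx (fun y => Csub (Theta th (cv x y)) (Cmul (Theta th x) (Theta th y)))) with (M := Nx + Nx); auto.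
  - intros a b ha hb. rewrite cv_add_r; try solve [l1auto]. rewrite !Theta_add; try solve [l1auto]. ceq.
  - intros k a ha. rewrite cv_scale_r; try solve [l1auto]. rewrite !Theta_scale; try solve [l1auto]. ceq.
  - intros a N ha hN. eapply Rle_trans. apply Cmod_sub. rewrite Cmod_mul.
    pose proof (Theta_bound th (cv x a) (Nx * N) (in_l1_cv _ _ hx ha) (cv_norm _ _ _ _ hx ha bx hN)).
    pose proof (Theta_bound th a N ha hN). pose proof (Theta_bound th x Nx hx bx).
    pose proof (Cmod_ge0 (Theta th a)). pose proof (Cmod_ge0 (Theta th x)). pose proof (l1_N_nonneg _ _ hN). nra.
  - pose proof (l1_N_nonneg _ _ bx). nra.
  - intros t. specialize (Step1 t x Nx hx bx). lra. Qed.

Lemma divle1 X W e : X <= e * W -> 0 < W -> X / W <= e.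
Proof. intros h hW. apply (Rmult_le_reg_r W); auto. unfold Rdiv. rewrite Rmult_assoc, Rinv_l; lra. Qed.
Lemma divle2 X W e : X / W <= e -> 0 < W -> X <= e * W.
Proof. intros h hW. apply (Rmult_le_compat_r W) in h; [|lra]. unfold Rdiv in h.
  rewrite Rmult_assoc, Rinv_l in h; lra. Qed.

Lemma bC_prod a b c : Csub (bC a) (Cmul (bC b) (bC c)) = (b2R a - b2R b * b2R c, 0).
Proof. unfold bC. ceq. Qed.
Lemma bC_sub a b : Csub (bC a) (bC b) = (b2R a - b2R b, 0).
Proof. unfold bC. ceq. Qed.

Lemma idem_C z : z = Cmul z z -> z = C0 \/ z = C1.
Proof. destruct z as [a b]. unfold Cmul, C0, C1; simpl. intros h. injection h; intros h2 h1.
  assert (b * (1 - 2 * a) = 0) by nra. apply Rmult_integral in H. destruct H as [hb|ha].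
  - subst b. assert (a * (a - 1) = 0) by nra. apply Rmult_integral in H. destruct H.
    left; f_equal; lra. right; f_equal; lra.
  - exfalso. assert (a = 1/2) by lra. subst a. nra. Qed.

Lemma Csub_eq0 a b : Cmod (Csub a b) <= 0 -> a = b.
Proof. intros h. assert (Csub a b = C0). apply Cmod_eq0. pose proof (Cmod_ge0 (Csub a b)); lra.
  unfold Csub, C0 in H. injection H; intros. apply injective_projections; lra. Qed.

Lemma dir1 : AMNM_l1 op w -> cond_ii op w.
Proof. intros H eps he. destruct (H (eps/2) ltac:(lra)) as [d [hd Hd]]. exists d. split; auto.
  intros phi hphi.
  assert (Hb : forall s t, Cmod (Csub (bC (phi (op s t))) (Cmul (bC (phi s)) (bC (phi t)))) <= d * w s * w t).
  { intros s t. rewrite bC_prod, Cmod_real. specialize (hphi s t). apply divle2 in hphi.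
    lra. pose proof (w_pos s); pose proof (w_pos t); nra. }
  assert (Hdef : defect_le op w (Theta phi) d).
  { intros x y z hx hy bx bY hz. rewrite (conv_cv x y z hx hy hz).
    pose proof (Theta_prod phi d ltac:(lra) Hb x y 1 1 hx hy bx bY). lra. }
  destruct (Hd (Theta phi) (Theta_dual phi) Hdef (eps/2) ltac:(lra)) as [phi0 [[Hdual Hmul] Hdist]].
  set (th := fun s => phi0 (delta s)).
  assert (Hth : forall s t, th (op s t) = Cmul (th s) (th t)).
  { intros s t. unfold th. rewrite <- cv_delta. apply Hmul; try apply in_l1_delta. apply cv_conv; apply in_l1_delta. }
  assert (Hid : forall s, th s = C0 \/ th s = C1).
  { intros s. apply idem_C. rewrite <- Hth. destruct HS as [_ [_ hid]]. rewrite hid. auto. }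
  exists (fun e => th e = C1). split.
  - destruct (classic (exists x, th x = C1)) as [hx|hx]; [right|left].
    + split; auto. split.
      * intros x y h1 h2. rewrite Hth, h1, h2. unfold C1; ceq.
      * intros x y hy hle. unfold sl_le in hle. pose proof (Hth y x). rewrite hle, hy in H0.
        destruct (Hid x) as [h|h]; auto. rewrite h in H0. unfold C1, C0 in H0. injection H0; intros. lra.
    + intros x hx'. apply hx. exists x; auto.
  - intros e. pose proof (Hdist (delta e) (w e) (in_l1_delta e) (l1_delta e)) as hd'.
    rewrite Theta_delta in hd'. fold (th e) in hd'. replace (eps / 2 + eps / 2) with eps in hd' by field.
    pose proof (w_pos e). split.
    + intros hF. rewrite hF in hd'. unfold C1 in hd'. change (1, 0) with (bC true) in hd'.
      rewrite bC_sub, Cmod_real in hd'. simpl b2R in hd'. apply divle1; auto.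
      rewrite Rabs_minus_sym. auto.
    + intros hF. destruct (Hid e) as [h|h]; [|contradiction]. rewrite h in hd'. unfold C0 in hd'.
      change (0, 0) with (bC false) in hd'.
      rewrite bC_sub, Cmod_real in hd'. simpl b2R in hd'. apply divle1; auto.
      rewrite Rabs_minus_sym. auto. Qed.

Lemma b2R_cases a b c : Rabs (b2R a - b2R b * b2R c) = 0 \/ Rabs (b2R a - b2R b * b2R c) = 1.
Proof. destruct a, b, c; unfold b2R; cbv iota; match goal with |- context [Rabs ?X] =>
  first [(replace X with 0 by ring); left; apply Rabs_R0 | (replace X with 1 by ring); right; apply Rabs_R1
        | (replace X with (- (1)) by ring); right; rewrite Rabs_Ropp; apply Rabs_R1] end. Qed.

Lemma sl_fact1 s t : op (op s t) s = op s t.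
Proof. destruct HS as [ha [hc hi]]. rewrite hc, ha, hi. auto. Qed.
Lemma sl_fact2 s t : op (op s t) t = op s t.
Proof. destruct HS as [ha [hc hi]]. rewrite <- ha, hi. auto. Qed.

Lemma dir2 : cond_ii op w -> AMNM_l1 op w.
Proof. intros H eps he. destruct (H (eps/2) ltac:(lra)) as [d' [hd' Hd']].
  set (k := Rmin (d' / 10) (Rmin (eps / 2) 1)).
  assert (hk : 0 < k). { unfold k. apply Rmin_pos. lra. apply Rmin_pos; lra. }
  assert (hk1 : k <= d' / 10) by apply Rmin_l.
  assert (hk2 : k <= eps / 2) by (eapply Rle_trans; [apply Rmin_r|apply Rmin_l]).
  assert (hk3 : k <= 1) by (eapply Rle_trans; [apply Rmin_r|apply Rmin_r]).
  exists (k * k). split. nra.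
  intros psi [[Hadd Hsc] [Mp HMp]] Hdef eta heta.
  set (pc := fun s => psi (delta s)).
  assert (F1 : forall s t, Cmod (Csub (pc (op s t)) (Cmul (pc s) (pc t))) <= k * k * w s * w t).
  { intros s t. pose proof (w_pos s) as ws. pose proof (w_pos t) as wt.
    set (c1 := (/ w s, 0) : Cx). set (c2 := (/ w t, 0) : Cx).
    assert (m1 : Cmod c1 = / w s). { unfold c1. rewrite Cmod_real. apply Rabs_right.
      apply Rle_ge, Rlt_le, Rinv_0_lt_compat; auto. }
    assert (m2 : Cmod c2 = / w t). { unfold c2. rewrite Cmod_real. apply Rabs_right.
      apply Rle_ge, Rlt_le, Rinv_0_lt_compat; auto. }
    assert (b1 : l1_norm_le w (fscale c1 (delta s)) 1).
    { pose proof (l1_sdelta c1 s). rewrite m1, Rinv_l in H0; auto; lra. }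
    assert (b2 : l1_norm_le w (fscale c2 (delta t)) 1).
    { pose proof (l1_sdelta c2 t). rewrite m2, Rinv_l in H0; auto; lra. }
    pose proof (Hdef _ _ _ (in_l1_sdelta c1 s) (in_l1_sdelta c2 t) b1 b2
      (cv_conv _ _ (in_l1_sdelta c1 s) (in_l1_sdelta c2 t))) as hD.
    rewrite cv_scale_l, cv_scale_r, cv_delta in hD; try solve [l1auto].
    rewrite !Hsc in hD; try solve [l1auto].
    replace (Csub (Cmul c1 (Cmul c2 (psi (delta (op s t))))) (Cmul (Cmul c1 (psi (delta s))) (Cmul c2 (psi (delta t)))))
      with (Cmul (Cmul c1 c2) (Csub (pc (op s t)) (Cmul (pc s) (pc t)))) in hD by (unfold pc; ceq).
    rewrite !Cmod_mul, m1, m2 in hD.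
    assert (0 < / w s * / w t) by (apply Rmult_lt_0_compat; apply Rinv_0_lt_compat; auto).
    apply (Rmult_le_compat_l (w s * w t)) in hD; [|nra].
    replace (w s * w t * (/ w s * / w t * Cmod (Csub (pc (op s t)) (Cmul (pc s) (pc t)))))
      with (Cmod (Csub (pc (op s t)) (Cmul (pc s) (pc t)))) in hD by (field; lra).
    lra. }
  assert (F2 : forall s, Cmod (pc s) <= k * w s \/ Cmod (Csub C1 (pc s)) <= k * w s).
  { intros s. pose proof (F1 s s) as h. destruct HS as [_ [_ hid]]. rewrite hid in h.
    replace (Csub (pc s) (Cmul (pc s) (pc s))) with (Cmul (pc s) (Csub C1 (pc s))) in h by (unfold C1; ceq).
    rewrite Cmod_mul in h. pose proof (Cmod_ge0 (pc s)). pose proof (Cmod_ge0 (Csub C1 (pc s))).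
    pose proof (w_pos s).
    destruct (Rle_or_lt (Cmod (pc s)) (k * w s)); auto.
    destruct (Rle_or_lt (Cmod (Csub C1 (pc s))) (k * w s)); auto.
    exfalso. assert (0 < k * w s) by nra. nra. }
  set (ph := fun s => if Rle_dec (Cmod (Csub C1 (pc s))) (Cmod (pc s)) then true else false).
  assert (F3 : forall s, Cmod (Csub (pc s) (bC (ph s))) <= k * w s).
  { intros s. unfold ph. destruct (Rle_dec _ _) as [h|h].
    - change (bC true) with C1. rewrite Cmod_sub_sym. destruct (F2 s); lra.
    - change (bC false) with C0. replace (Csub (pc s) C0) with (pc s) by ceq. destruct (F2 s); lra. }
  assert (F3' : forall s, Cmod (pc s) <= 1 + k * w s).
  { intros s. replace (pc s) with (Cadd (Csub (pc s) (bC (ph s))) (bC (ph s))) by ceq.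
    eapply Rle_trans. apply Cmod_add. pose proof (F3 s). pose proof (Cmod_bC (ph s)). lra. }
  assert (F4 : forall e f, Rabs (b2R (ph (op e f)) - b2R (ph e) * b2R (ph f)) / (w e * w f) <= d').
  { intros e f. pose proof (w_ge1 e) as we. pose proof (w_ge1 f) as wf.
    assert (hP : 0 < w e * w f) by nra.
    assert (HX : d' * (w e * w f) < 1 -> Rabs (b2R (ph (op e f)) - b2R (ph e) * b2R (ph f)) < 1/2).
    { intros hl. rewrite <- Cmod_real, <- bC_prod.
      replace (Csub (bC (ph (op e f))) (Cmul (bC (ph e)) (bC (ph f)))) with
        (Cadd (Csub C0 (Csub (pc (op e f)) (bC (ph (op e f)))))
          (Cadd (Csub (pc (op e f)) (Cmul (pc e) (pc f)))
             (Cadd (Cmul (Csub (pc e) (bC (ph e))) (pc f)) (Cmul (bC (ph e)) (Csub (pc f) (bC (ph f))))))) by ceq.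
      eapply Rle_lt_trans. apply Cmod_add. rewrite Cmod_opp.
      eapply Rle_lt_trans. apply Rplus_le_compat_l. apply Cmod_add.
      eapply Rle_lt_trans. apply Rplus_le_compat_l. apply Rplus_le_compat_l. apply Cmod_add.
      rewrite !Cmod_mul.
      pose proof (F3 (op e f)). pose proof (F1 e f). pose proof (F3 e). pose proof (F3 f).
      pose proof (F3' f). pose proof (Cmod_bC (ph e)). pose proof (Hsub e f).
      pose proof (Cmod_ge0 (pc f)). pose proof (Cmod_ge0 (bC (ph e))).
      pose proof (Cmod_ge0 (Csub (pc e) (bC (ph e)))). pose proof (Cmod_ge0 (Csub (pc f) (bC (ph f)))).
      assert (kP : k * (w e * w f) < 1/10).
      { assert (k * (w e * w f) <= d' / 10 * (w e * w f)) by nra. lra. }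
      assert (ke : k * w e < 1/10) by nra.
      assert (kf : k * w f < 1/10) by nra.
      assert (t1 : Cmod (Csub (pc (op e f)) (bC (ph (op e f))))  < 1/10) by nra.
      assert (t2 : k * k * w e * w f < 1/10) by nra.
      assert (t3 : Cmod (Csub (pc e) (bC (ph e))) * Cmod (pc f) <= k * w e * (1 + k * w f)) by nra.
      assert (t3' : k * w e * (1 + k * w f) < 1/10 + 1/100) by nra.
      assert (t4 : Cmod (bC (ph e)) * Cmod (Csub (pc f) (bC (ph f))) <= k * w f) by nra.
      lra. }
    destruct (b2R_cases (ph (op e f)) (ph e) (ph f)) as [h0|h1].
    - rewrite h0. unfold Rdiv. rewrite Rmult_0_l. lra.
    - rewrite h1. destruct (Rlt_or_le (d' * (w e * w f)) 1) as [hl|hl].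
      + specialize (HX hl). lra.
      + apply divle1; auto. }
  destruct (Hd' ph F4) as [F [HF Hpt]].
  set (thF := fun s => if excluded_middle_informative (F s) then true else false).
  assert (Hmulth : forall s t, bC (thF (op s t)) = Cmul (bC (thF s)) (bC (thF t))).
  { intros s t. unfold thF.
    destruct (excluded_middle_informative (F s)) as [fs|fs];
    destruct (excluded_middle_informative (F t)) as [ft|ft];
    destruct (excluded_middle_informative (F (op s t))) as [fst|fst]; unfold bC, b2R; try ceq.
    all: exfalso; destruct HF as [HF|[_ [Hc Hu]]];
      [ first [exact (HF _ fst) | exact (HF _ fs) | exact (HF _ ft)]
      | first [exact (fst (Hc _ _ fs ft)) | exact (fs (Hu _ _ fst (sl_fact1 s t))) | exact (ft (Hu _ _ fst (sl_fact2 s t)))] ]. }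
  exists (Theta thF). split.
  - split. apply Theta_dual. intros x y z hx hy hz. rewrite (conv_cv x y z hx hy hz).
    destruct hx as [Nx bx]. destruct hy as [Ny bY].
    apply Csub_eq0. replace 0 with (0 * Nx * Ny) by ring. apply (Theta_prod thF 0); auto; try lra.
    intros s t. rewrite Hmulth. replace (Csub _ _) with C0 by ceq. rewrite Cmod_C0. lra.
    exists Nx; auto. exists Ny; auto.
  - intros a N ha hN. pose proof (l1_N_nonneg _ _ hN).
    assert (Cmod (Csub (psi a) (Theta thF a)) <= eps * N).
    { apply (approx (fun a => Csub (psi a) (Theta thF a))) with (M := Mp + 1); auto; try lra.
      - intros x y hx hy. rewrite Hadd, Theta_add; auto. ceq.
      - intros c x hx. rewrite Hsc, Theta_scale; auto. ceq.
      - intros x M hx hM. eapply Rle_trans. apply Cmod_sub. pose proof (HMp x M hx hM).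
        pose proof (Theta_bound thF x M hx hM). lra.
      - intros s. rewrite Theta_delta. fold (pc s). pose proof (w_pos s).
        eapply Rle_trans. apply (Cmod_tri _ (bC (ph s))). pose proof (F3 s).
        assert (Cmod (Csub (bC (ph s)) (bC (thF s))) <= eps / 2 * w s).
        { destruct (Hpt s) as [p1 p2]. rewrite bC_sub, Cmod_real. unfold thF.
          destruct (excluded_middle_informative (F s)) as [fs|fs].
          - specialize (p1 fs). apply divle2 in p1; auto. simpl b2R. rewrite Rabs_minus_sym. auto.
          - specialize (p2 fs). apply divle2 in p2; auto. simpl b2R. rewrite Rabs_minus_sym. auto. }
        assert (k * w s <= eps / 2 * w s) by nra. lra. }
    eapply Rle_trans; [eassumption|]. apply Rmult_le_compat_r; auto. lra. Qed.

End W.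

Theorem corollaryc (S : Type) (op : S -> S -> S) (w : S -> R)
  (HS : is_semilattice op) (Hw : is_weight w) (Hsub : submultiplicative op w) :
  AMNM_l1 op w <-> cond_ii op w.
Proof. split. apply dir1; auto. apply dir2; auto. Qed.
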